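(* Let $\kappa_i,\theta_i,\sigma_i>0$ and $\varepsilon_i\ge0$ for $i=1,2$, and let $\gamma\in[-\sqrt{\varepsilon_1\varepsilon_2},\sqrt{\varepsilon_1\varepsilon_2}]$. Set $\beta_i=\varepsilon_i/\sigma_i^2$, $\alpha_i=\gamma/\sigma_i^2$, $\nu_i=2\kappa_i\theta_i/\sigma_i^2$. Define on $\mathbb R_+^2$ the drift $$A_1(x)=\kappa_1(1+\beta_1x_2)(\theta_1-x_1)+\kappa_2\alpha_2x_1(\theta_2-x_2),\quad A_2(x)=\kappa_2(1+\beta_2x_1)(\theta_2-x_2)+\kappa_1\alpha_1x_2(\theta_1-x_1),$$ the diffusion matrix $$S(x)=\begin{pmatrix}\sigma_1^2x_1+\varepsilon_1x_1x_2 & \gamma x_1x_2\\ \gamma x_1x_2 & \sigma_2^2x_2+\varepsilon_2x_1x_2\end{pmatrix},$$ and the probability density $\pi(x)=\pi_{\nu_1}(x_1)\pi_{\nu_2}(x_2)$, where $\pi_{\nu_i}(y)=\frac{(\nu_i/\theta_i)^{\nu_i}}{\Gamma(\nu_i)}y^{\nu_i-1}e^{-\nu_iy/\theta_i}$. Then the generator $Lf=A_1\partial_{x_1}f+A_2\partial_{x_2}f+\frac12\big[S_{11}\partial_{x_1x_1}f+2S_{12}\partial_{x_1x_2}f+S_{22}\partial_{x_2x_2}f\big]$ of the diffusion $dX=A(X)\,dt+B(X)\,dw$ (with $BB^T=S$ and $w$ a two-dimensional standard Wiener process) satisfies, for every smooth $f$ on the open quadrant $(0,\infty)^2$, $$Lf(x)=\frac{1}{2\pi(x)}\nabla\cdot\big(\pi(x)S(x)\nabla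 f(x)\big);$$ that is, the process is reversible with respect to the product of the two Gamma distributions $\pi_{\nu_1,\nu_2}$.
   Context: This is the ''asymptotically decoupling correlated'' (ADC) two-factor model; when $\varepsilon_1=\varepsilon_2=\gamma=0$ it reduces to two independent CIR processes. *)

(* Defs.v *)
From Stdlib Require Import Reals List.
From Coquelicot Require Import Coquelicot.
Open Scope R_scope.

Definition Gamma_fn (nu : R) : R :=
  RInt_gen (fun t => Rpower t (nu - 1) * exp (- t)) (at_right 0) (Rbar_locally p_infty).

Definition gamma_density (nu theta y : R) : R :=
  Rpower (nu / theta) nu / Gamma_fn nu * Rpower y (nu - 1) * exp (- nu * y / theta).

Definition pd1 (f : R -> R -> R) : R -> R -> R := fun x y => Derive (fun t => f t y) x.
Definition pd2 (f : R -> R -> R) : R -> R -> R := fun x y => Derive (fun t => f x t) y.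

(* Iterated partial derivative along a list of directions (false = x1, true = x2). *)
Fixpoint iter_partial (l : list bool) (f : R -> R -> R) : R -> R -> R :=
  match l with
  | nil => f
  | b :: l' => (if b then pd2 else pd1) (iter_partial l' f)
  end.

Definition quadrant (x y : R) : Prop := 0 < x /\ 0 < y.

Definition smooth_on_quadrant (f : R -> R -> R) : Prop :=
  forall (l : list bool) (x y : R), quadrant x y ->
    ex_derive (fun t => iter_partial l f t y) x /\
    ex_derive (fun t => iter_partial l f x t) y /\
    continuous (fun p : R * R => iter_partial l f (fst p) (snd p)) (x, y).

(* Main.v *)
Require Import Defs.
From Stdlib Require Import Reals List Lra Classical_Prop.
From Coquelicot Require Import Coquelicot.
Open Scope R_scope.


Lemma ballR a (e:posreal) b : Rabs (b - a) < e -> ball a e b.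
Proof. intros H; exact H. Qed.

Lemma mono_lim_0 (G : R -> R) (m : R) :
  (forall x y, 0 < x <= y -> G x <= G y) -> (forall x, 0 < x -> m <= G x) ->
  exists l, filterlim G (at_right 0) (locally l) /\ forall x, 0 < x -> l <= G x.
Proof.
  intros Hm Hb.
  set (E := fun z => exists x, 0 < x /\ z = - G x).
  assert (HE : bound E). { exists (- m). intros z [x [Hx ->]]. specialize (Hb x Hx). lra. }
  assert (HE2 : exists z, E z). { exists (- G 1). exists 1. split; [lra|reflexivity]. }
  destruct (completeness E HE HE2) as [u [Hu1 Hu2]].
  exists (- u). split.
  - apply filterlim_locally. intros eps.
    assert (exists x0, 0 < x0 /\ u - eps < - G x0) as [x0 [Hx0 Hlt]].
    { apply Classical_Prop.NNPP. intros Hn. assert (u <= u - eps).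
      { apply Hu2. intros z [x [Hx ->]]. apply Rnot_lt_le. intros Hc. apply Hn. exists x. split; auto. }
      destruct eps; simpl in *; lra. }
    exists (mkposreal x0 Hx0). intros y Hy Hy0. apply ballR.
    assert (Hyx : y < x0).
    { unfold ball in Hy; simpl in Hy; unfold AbsRing_ball, abs, minus, plus, opp in Hy; simpl in Hy.
      apply Rabs_lt_between in Hy. lra. }
    assert (G y <= G x0) by (apply Hm; lra).
    assert (- G y <= u) by (apply Hu1; exists y; split; auto; lra).
    apply Rabs_lt_between. lra.
  - intros x Hx. assert (- G x <= u) by (apply Hu1; exists x; split; auto). lra.
Qed.

Lemma mono_lim_oo (G : R -> R) (M : R) :
  (forall x y, 0 < x <= y -> G x <= G y) -> (forall x, 0 < x -> G x <= M) ->
  exists l, filterlim G (Rbar_locally p_infty) (locally l) /\ forall x, 0 < x -> G x <= l.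
Proof.
  intros Hm Hb.
  set (E := fun z => exists x, 0 < x /\ z = G x).
  assert (HE : bound E). { exists M. intros z [x [Hx ->]]. auto. }
  assert (HE2 : exists z, E z). { exists (G 1). exists 1. split; [lra|reflexivity]. }
  destruct (completeness E HE HE2) as [u [Hu1 Hu2]].
  exists u. split.
  - apply filterlim_locally. intros eps.
    assert (exists x0, 0 < x0 /\ u - eps < G x0) as [x0 [Hx0 Hlt]].
    { apply Classical_Prop.NNPP. intros Hn. assert (u <= u - eps).
      { apply Hu2. intros z [x [Hx ->]]. apply Rnot_lt_le. intros Hc. apply Hn. exists x. split; auto. }
      destruct eps; simpl in *; lra. }
    exists x0. intros y Hy. apply ballR.
    assert (G x0 <= G y) by (apply Hm; lra).
    assert (G y <= u) by (apply Hu1; exists y; split; auto; lra).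
    apply Rabs_lt_between. lra.
  - intros x Hx. apply Hu1. exists x. split; auto.
Qed.

Definition ff (nu t : R) := exp ((nu - 1) * ln t - t).

Lemma pos_between a b z : 0 < a -> 0 < b -> Rmin a b <= z <= Rmax a b -> 0 < z.
Proof. intros Ha Hb [H1 _]. apply Rlt_le_trans with (Rmin a b); auto. apply Rmin_glb_lt; auto. Qed.

Lemma ff_cont nu t : 0 < t -> continuous (ff nu) t.
Proof. intros Ht. apply (@ex_derive_continuous R_AbsRing R_NormedModule). unfold ff. auto_derive. lra. Qed.

Lemma ff_pos nu t : 0 < ff nu t.
Proof. apply exp_pos. Qed.

Lemma ff_ex nu a b : 0 < a -> 0 < b -> ex_RInt (ff nu) a b.
Proof. intros Ha Hb. apply (@ex_RInt_continuous R_CompleteNormedModule). intros z Hz. apply ff_cont. eapply pos_between; [exact Ha|exact Hb|exact Hz]. Qed.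

Definition GG nu x := RInt (ff nu) 1 x.

Lemma GG_mono nu x y : 0 < x <= y -> GG nu x <= GG nu y.
Proof.
  intros H. unfold GG.
  rewrite <- (RInt_Chasles (ff nu) 1 x y) by (apply ff_ex; lra).
  assert (0 <= RInt (ff nu) x y).
  { apply RInt_ge_0; [lra| apply ff_ex; lra|]. intros; left; apply ff_pos. }
  unfold plus; simpl. lra.
Qed.

Lemma GG_opp nu x : 0 < x -> GG nu x = - RInt (ff nu) x 1.
Proof.
  intros Hx. unfold GG.
  pose proof (RInt_Chasles (ff nu) 1 x 1 (ff_ex nu 1 x ltac:(lra) Hx) (ff_ex nu x 1 Hx ltac:(lra))) as H.
  rewrite RInt_point in H. unfold plus, zero in H; simpl in H. lra.
Qed.

Lemma GG_lb nu x : 0 < nu -> 0 < x -> - / nu <= GG nu x.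
Proof.
  intros Hnu Hx.
  destruct (Rle_lt_dec x 1) as [H1|H1].
  2:{ assert (GG nu 1 <= GG nu x) by (apply GG_mono; lra).
      unfold GG at 1 in H. rewrite RInt_point in H. unfold zero in H; simpl in H.
      assert (0 < / nu) by (apply Rinv_0_lt_compat; lra). lra. }
  rewrite GG_opp by lra.
  set (p := fun t => exp ((nu - 1) * ln t)).
  set (h := fun t => exp (nu * ln t) / nu).
  assert (Hd : forall t, Rmin x 1 <= t <= Rmax x 1 -> is_derive h t (p t)).
  { intros t Ht. assert (0 < t) by (apply (pos_between x 1 t Hx ltac:(lra) Ht)).
    unfold h, p. auto_derive. lra.
    replace ((nu - 1) * ln t) with (nu * ln t + - ln t) by ring.
    rewrite exp_plus, exp_Ropp, exp_ln by lra. field. lra. }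
  assert (Hc : forall t, Rmin x 1 <= t <= Rmax x 1 -> continuous p t).
  { intros t Ht. assert (0 < t) by (apply (pos_between x 1 t Hx ltac:(lra) Ht)).
    apply (@ex_derive_continuous R_AbsRing R_NormedModule). unfold p. auto_derive. lra. }
  pose proof (is_RInt_derive h p x 1 Hd Hc) as HI.
  assert (RInt (ff nu) x 1 <= RInt p x 1).
  { apply RInt_le; auto. apply ff_ex; lra. eexists; eauto.
    intros t Ht. unfold ff, p. apply exp_le_3 || idtac.
    apply Rlt_le. apply exp_increasing. lra. }
  rewrite (is_RInt_unique _ _ _ _ HI) in H. unfold minus, plus, opp in H; simpl in H.
  unfold h in H. rewrite ln_1, Rmult_0_r, exp_0 in H.
  assert (0 < exp (nu * ln x) / nu) by (apply Rdiv_lt_0_compat; [apply exp_pos|lra]).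
  unfold Rdiv in *. lra.
Qed.

Lemma ln_le_sub1 y : 0 < y -> ln y <= y - 1.
Proof. intros Hy. pose proof (exp_ineq1_le (ln y)). rewrite exp_ln in H by lra. lra. Qed.

Lemma ff_bound nu t : 1 <= t ->
  ff nu t <= exp (Rabs (nu - 1) * ln (2 * (Rabs (nu - 1) + 1))) * exp (- t / 2).
Proof.
  intros Ht. unfold ff. rewrite <- exp_plus.
  set (A := Rabs (nu - 1)). set (c := 2 * (A + 1)).
  assert (HA : 0 <= A) by apply Rabs_pos.
  assert (Hc : 0 < c) by (unfold c; lra).
  assert (HL : 0 <= ln t) by (rewrite <- ln_1; apply ln_le; lra).
  assert (HL2 : ln t <= t / c - 1 + ln c).
  { replace (ln t) with (ln (t / c) + ln c).
    2:{ rewrite ln_div by lra. ring. }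
    pose proof (ln_le_sub1 (t / c)) as H. assert (0 < t / c) by (apply Rdiv_lt_0_compat; lra). specialize (H H0). lra. }
  assert (H1 : (nu - 1) * ln t <= A * ln t).
  { apply Rmult_le_compat_r; auto. apply Rle_abs. }
  assert (H2 : A * ln t <= A * (t / c - 1 + ln c)) by (apply Rmult_le_compat_l; auto).
  assert (H3 : A * (t / c) <= t / 2).
  { unfold c. unfold Rdiv. rewrite Rinv_mult. 
    assert (0 < / (A + 1)) by (apply Rinv_0_lt_compat; lra).
    assert (A * / (A + 1) <= 1).
    { apply (Rmult_le_reg_r (A + 1)); [lra|]. rewrite Rmult_assoc, Rinv_l by lra. lra. }
    assert (0 <= t * / 2) by lra.
    replace (A * (t * (/ 2 * / (A + 1)))) with ((A * / (A + 1)) * (t * / 2)) by ring.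
    replace (t * / 2) with (1 * (t * / 2)) at 2 by ring.
    apply Rmult_le_compat_r; auto. }
  assert (Hf : (nu - 1) * ln t - t <= A * ln c + - t / 2) by nra.
  destruct Hf as [Hf|Hf]; [left; apply exp_increasing; exact Hf| rewrite Hf; right; reflexivity].
Qed.

Lemma GG_ub nu x : 0 < x ->
  GG nu x <= 2 * exp (Rabs (nu - 1) * ln (2 * (Rabs (nu - 1) + 1))).
Proof.
  intros Hx. set (K := exp (Rabs (nu - 1) * ln (2 * (Rabs (nu - 1) + 1)))).
  assert (HK : 0 < K) by apply exp_pos.
  destruct (Rle_lt_dec x 1) as [H1|H1].
  { assert (GG nu x <= GG nu 1) by (apply GG_mono; lra).
    unfold GG at 2 in H. rewrite RInt_point in H. unfold zero in H; simpl in H. lra. }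
  set (p := fun t => K * exp (- t / 2)).
  set (h := fun t => - 2 * K * exp (- t / 2)).
  assert (Hd : forall t, Rmin 1 x <= t <= Rmax 1 x -> is_derive h t (p t)).
  { intros t Ht. unfold h, p. auto_derive. auto. change (- t * / 2) with (- t / 2). field. }
  assert (Hc : forall t, Rmin 1 x <= t <= Rmax 1 x -> continuous p t).
  { intros t Ht. apply (@ex_derive_continuous R_AbsRing R_NormedModule). unfold p. auto_derive. auto. }
  pose proof (is_RInt_derive h p 1 x Hd Hc) as HI.
  assert (RInt (ff nu) 1 x <= RInt p 1 x).
  { apply RInt_le; auto. lra. apply ff_ex; lra. eexists; eauto.
    intros t Ht. apply ff_bound. lra. }
  rewrite (is_RInt_unique _ _ _ _ HI) in H. unfold minus, plus, opp in H; simpl in H.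
  unfold h in H. unfold GG.
  assert (0 < exp (- x / 2)) by apply exp_pos.
  assert (exp (- (1) / 2) <= 1).
  { assert (Hq : exp (- (1) / 2) < exp 0) by (apply exp_increasing; lra). rewrite exp_0 in Hq. lra. }
  nra.
Qed.

Lemma GG_deriv nu x : 0 < x -> is_derive (GG nu) x (ff nu x).
Proof.
  intros Hx. apply (is_derive_RInt (ff nu) (GG nu) 1 x).
  - apply (filter_imp (fun u => 0 < u)). intros u Hu. apply (RInt_correct (ff nu)). apply ff_ex; lra.
    apply open_gt; auto.
  - apply ff_cont; auto.
Qed.

Lemma Gamma_pos nu : 0 < nu -> 0 < Gamma_fn nu.
Proof.
  intros Hnu.
  destruct (mono_lim_0 (GG nu) (- / nu) (GG_mono nu) (fun x => GG_lb nu x Hnu)) as [l0 [Hl0 Hl0']].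
  destruct (mono_lim_oo (GG nu) _ (GG_mono nu) (GG_ub nu)) as [l1 [Hl1 Hl1']].
  assert (HF1 : forall P : R -> Prop, (forall x, 0 < x -> P x) -> at_right 0 P).
  { intros P HP. exists (mkposreal 1 Rlt_0_1). intros y _ Hy. apply HP; auto. }
  assert (HF2 : forall P : R -> Prop, (forall x, 0 < x -> P x) -> Rbar_locally p_infty P).
  { intros P HP. exists 0. intros y Hy. apply HP; auto. }
  assert (HI : is_RInt_gen (Derive (GG nu)) (at_right 0) (Rbar_locally p_infty) (l1 - l0)).
  { apply is_RInt_gen_Derive; auto.
    - apply Filter_prod with (fun a => 0 < a) (fun b => 0 < b); auto.
      intros a b Ha Hb t Ht. eexists. apply GG_deriv. eapply (pos_between a b t); eauto.
    - apply Filter_prod with (fun a => 0 < a) (fun b => 0 < b); auto.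
      intros a b Ha Hb t Ht. assert (Ht0 : 0 < t) by (eapply (pos_between a b t); eauto).
      apply continuous_ext_loc with (ff nu).
      + apply (filter_imp (fun u => 0 < u)). intros u Hu. symmetry. apply is_derive_unique, GG_deriv; auto.
        apply open_gt; auto.
      + apply ff_cont; auto. }
  assert (HI2 : is_RInt_gen (fun t => Rpower t (nu - 1) * exp (- t)) (at_right 0) (Rbar_locally p_infty) (l1 - l0)).
  { eapply is_RInt_gen_ext; [|exact HI].
    - apply Filter_prod with (fun a => 0 < a) (fun b => 0 < b); auto.
      intros a b Ha Hb t Ht. assert (Ht0 : 0 < t).
      { simpl in Ht. assert (0 < Rmin a b) by (apply Rmin_glb_lt; auto). lra. }
      rewrite (is_derive_unique _ _ _ (GG_deriv nu t Ht0)). unfold ff, Rpower. rewrite <- exp_plus. f_equal. }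
  unfold Gamma_fn. rewrite (is_RInt_gen_unique _ _ HI2).
  assert (Hh : 0 < RInt (ff nu) (1/2) 1).
  { apply RInt_gt_0. lra. intros; apply ff_pos. intros; apply ff_cont; lra. }
  assert (l0 <= GG nu (1/2)) by (apply Hl0'; lra).
  rewrite GG_opp in H by lra.
  assert (GG nu 1 <= l1) by (apply Hl1'; lra).
  unfold GG in H0. rewrite RInt_point in H0. unfold zero in H0; simpl in H0. lra.
Qed.

Lemma key (G a P b Q : R -> R) (x dG da dP db dQ : R) :
  is_derive G x dG -> is_derive a x da -> is_derive P x dP ->
  is_derive b x db -> is_derive Q x dQ ->
  is_derive (fun t => G t * (a t * P t + b t * Q t)) x
    (dG * (a x * P x + b x * Q x) + G x * (da * P x + a x * dP + (db * Q x + b x * dQ))).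
Proof.
  intros HG Ha HP Hb HQ.
  apply (is_derive_mult G (fun t => a t * P t + b t * Q t)); auto.
  2:{ intros; apply Rmult_comm. }
  apply (is_derive_plus (fun t => a t * P t) (fun t => b t * Q t)).
  - apply (is_derive_mult a P); auto. intros; apply Rmult_comm.
  - apply (is_derive_mult b Q); auto. intros; apply Rmult_comm.
Qed.

Lemma gd_deriv nu th y : 0 < th -> 0 < y ->
  is_derive (gamma_density nu th) y (gamma_density nu th y * ((nu - 1) / y - nu / th)).
Proof.
  intros Hth Hy. unfold gamma_density. set (C := Rpower (nu / th) nu / Gamma_fn nu).
  unfold Rpower. auto_derive. lra. unfold Rdiv. field. lra.
Qed.

Lemma gd_pos nu th y : 0 < nu -> 0 < th -> 0 < gamma_density nu th y.
Proof.
  intros Hnu Hth. unfold gamma_density, Rpower.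
  pose proof (Gamma_pos nu Hnu).
  apply Rmult_lt_0_compat; [apply Rmult_lt_0_compat|apply exp_pos].
  apply Rdiv_lt_0_compat; auto; apply exp_pos. apply exp_pos.
Qed.

Theorem mainTheorem3
  (k1 k2 th1 th2 s1 s2 e1 e2 g : R)
  (hk1 : 0 < k1) (hk2 : 0 < k2) (hth1 : 0 < th1) (hth2 : 0 < th2)
  (hs1 : 0 < s1) (hs2 : 0 < s2) (he1 : 0 <= e1) (he2 : 0 <= e2)
  (hg : - sqrt (e1 * e2) <= g <= sqrt (e1 * e2))
  (f : R -> R -> R) (hf : smooth_on_quadrant f)
  (x1 x2 : R) (hx : quadrant x1 x2) :
  let b1 := e1 / s1 ^ 2 in
  let b2 := e2 / s2 ^ 2 in
  let a1 := g / s1 ^ 2 in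
  let a2 := g / s2 ^ 2 in
  let nu1 := 2 * k1 * th1 / s1 ^ 2 in
  let nu2 := 2 * k2 * th2 / s2 ^ 2 in
  let A1 := fun y1 y2 => k1 * (1 + b1 * y2) * (th1 - y1) + k2 * a2 * y1 * (th2 - y2) in
  let A2 := fun y1 y2 => k2 * (1 + b2 * y1) * (th2 - y2) + k1 * a1 * y2 * (th1 - y1) in
  let S11 := fun y1 y2 => s1 ^ 2 * y1 + e1 * y1 * y2 in
  let S12 := fun y1 y2 => g * y1 * y2 in
  let S22 := fun y1 y2 => s2 ^ 2 * y2 + e2 * y1 * y2 in
  let dens := fun y1 y2 => gamma_density nu1 th1 y1 * gamma_density nu2 th2 y2 in
  let Lf := A1 x1 x2 * pd1 f x1 x2 + A2 x1 x2 * pd2 f x1 x2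
            + / 2 * (S11 x1 x2 * pd1 (pd1 f) x1 x2 + 2 * S12 x1 x2 * pd2 (pd1 f) x1 x2
                     + S22 x1 x2 * pd2 (pd2 f) x1 x2) in
  let flux1 := fun y1 y2 => dens y1 y2 * (S11 y1 y2 * pd1 f y1 y2 + S12 y1 y2 * pd2 f y1 y2) in
  let flux2 := fun y1 y2 => dens y1 y2 * (S12 y1 y2 * pd1 f y1 y2 + S22 y1 y2 * pd2 f y1 y2) in
  Lf = / (2 * dens x1 x2) * (pd1 flux1 x1 x2 + pd2 flux2 x1 x2).
Proof.
  intros b1 b2 a1 a2 nu1 nu2 A1 A2 S11 S12 S22 dens Lf flux1 flux2.
  destruct hx as [hx1 hx2].
  assert (Hnu1 : 0 < nu1) by (unfold nu1; apply Rdiv_lt_0_compat; [nra| apply pow_lt; lra]).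
  assert (Hnu2 : 0 < nu2) by (unfold nu2; apply Rdiv_lt_0_compat; [nra| apply pow_lt; lra]).
  set (G1 := gamma_density nu1 th1). set (G2 := gamma_density nu2 th2).
  assert (HG1 : 0 < G1 x1) by (apply gd_pos; auto).
  assert (HG2 : 0 < G2 x2) by (apply gd_pos; auto).
  pose proof (hf nil x1 x2 (conj hx1 hx2)) as H0.
  pose proof (hf (false :: nil) x1 x2 (conj hx1 hx2)) as Hf1.
  pose proof (hf (true :: nil) x1 x2 (conj hx1 hx2)) as Hf2.
  simpl in H0, Hf1, Hf2.
  destruct Hf1 as [Hf1a [Hf1b _]]. destruct Hf2 as [Hf2a [Hf2b _]].
  assert (E1 : pd1 flux1 x1 x2 =
     (G1 x1 * ((nu1 - 1) / x1 - nu1 / th1) * G2 x2) * (S11 x1 x2 * pd1 f x1 x2 + S12 x1 x2 * pd2 f x1 x2)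
     + G1 x1 * G2 x2 * ((s1 ^ 2 + e1 * x2) * pd1 f x1 x2 + S11 x1 x2 * pd1 (pd1 f) x1 x2
        + ((g * x2) * pd2 f x1 x2 + S12 x1 x2 * pd1 (pd2 f) x1 x2))).
  { unfold pd1 at 1. apply is_derive_unique.
    apply (key (fun t => dens t x2) (fun t => S11 t x2) (fun t => pd1 f t x2)
                (fun t => S12 t x2) (fun t => pd2 f t x2)).
    - apply (is_derive_ext (fun t => G2 x2 * G1 t)). intros; unfold dens; apply Rmult_comm.
      replace (G1 x1 * ((nu1 - 1) / x1 - nu1 / th1) * G2 x2) with (G2 x2 * (G1 x1 * ((nu1 - 1) / x1 - nu1 / th1))) by ring.
      apply is_derive_scal. apply gd_deriv; auto.
    - unfold S11. auto_derive. auto. ring.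
    - apply Derive_correct. exact Hf1a.
    - unfold S12. auto_derive. auto. ring.
    - apply Derive_correct. exact Hf2a. }
  assert (E2 : pd2 flux2 x1 x2 =
     (G1 x1 * (G2 x2 * ((nu2 - 1) / x2 - nu2 / th2))) * (S12 x1 x2 * pd1 f x1 x2 + S22 x1 x2 * pd2 f x1 x2)
     + G1 x1 * G2 x2 * ((g * x1) * pd1 f x1 x2 + S12 x1 x2 * pd2 (pd1 f) x1 x2
        + ((s2 ^ 2 + e2 * x1) * pd2 f x1 x2 + S22 x1 x2 * pd2 (pd2 f) x1 x2))).
  { unfold pd2 at 1. apply is_derive_unique.
    apply (key (fun t => dens x1 t) (fun t => S12 x1 t) (fun t => pd1 f x1 t)
                (fun t => S22 x1 t) (fun t => pd2 f x1 t)).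
    - apply (is_derive_ext (fun t => G1 x1 * G2 t)). intros; unfold dens; reflexivity.
      apply is_derive_scal. apply gd_deriv; auto.
    - unfold S12. auto_derive. auto. ring.
    - apply Derive_correct. exact Hf1b.
    - unfold S22. auto_derive. auto. ring.
    - apply Derive_correct. exact Hf2b. }
  assert (HS : pd1 (pd2 f) x1 x2 = pd2 (pd1 f) x1 x2).
  { unfold pd1, pd2. apply Schwarz.
    - assert (Hd : 0 < Rmin x1 x2) by (apply Rmin_glb_lt; auto).
      exists (mkposreal _ Hd). simpl. intros u v Hu Hv.
      apply Rabs_lt_between in Hu. apply Rabs_lt_between in Hv.
      pose proof (Rmin_l x1 x2). pose proof (Rmin_r x1 x2).
      assert (Q : quadrant u v) by (split; lra).
      destruct (hf nil u v Q) as [Q1 [Q2 _]].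
      destruct (hf (true :: nil) u v Q) as [Q3 _].
      destruct (hf (false :: nil) u v Q) as [_ [Q4 _]].
      simpl in *. repeat split; assumption.
    - apply continuity_2d_pt_filterlim.
      exact (proj2 (proj2 (hf (false :: true :: nil) x1 x2 (conj hx1 hx2)))).
    - apply continuity_2d_pt_filterlim.
      exact (proj2 (proj2 (hf (true :: false :: nil) x1 x2 (conj hx1 hx2)))). }
  unfold Lf. rewrite E1, E2, HS.
  unfold dens, A1, A2, S11, S12, S22, b1, b2, a1, a2. fold G1 G2.
  unfold nu1, nu2.
  field. repeat split; lra.
Qed.
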